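(* Every finite abelian group is completely $\Phi$-realisable.
   Context: All groups are finite. $\Phi(H)$ denotes the Frattini subgroup of $H$. A finite group $G$ is completely $\Phi$-realisable if there is a finite group $H$ such that: (i) $G\cong \Phi(H)$; (ii) for every subgroup $G_1\leq G$ there exists $H_1\leq H$ with $G_1\cong \Phi(H_1)$; (iii) for every $H_1\leq H$ there exists $G_1\leq G$ with $\Phi(H_1)\cong G_1$. *)

(* Defs.v *)
From mathcomp Require Import all_boot all_fingroup all_solvable.
Set Implicit Arguments. Unset Strict Implicit. Unset Printing Implicit Defensive.
Local Open Scope group_scope.

Definition completely_Phi_realisable (gT : finGroupType) (G : {group gT}) : Prop :=
  exists (hT : finGroupType) (H : {group hT}),
    [/\ G \isog 'Phi(H),
        (forall G1 : {group gT}, G1 \subset G ->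
           exists2 H1 : {group hT}, H1 \subset H & G1 \isog 'Phi(H1))
      & (forall H1 : {group hT}, H1 \subset H ->
           exists2 G1 : {group gT}, G1 \subset G & 'Phi(H1) \isog G1)].

(* Main.v *)
Require Import Defs.
From mathcomp Require Import all_boot all_fingroup all_solvable.
From mathcomp Require Import zmodp.
Set Implicit Arguments. Unset Strict Implicit. Unset Printing Implicit Defensive.
Local Open Scope group_scope.

Section Pow.
Variables (gT : finGroupType) (H : {group gT}) (cH : abelian H) (r : nat).
Definition pow_fun := fun x : gT => x ^+ r.
Lemma pow_morphM : {in H &, {morph pow_fun : x y / x * y}}.
Proof.
move=> x y Hx Hy; rewrite /pow_fun expgMn //.
exact: (centsP cH x Hx y Hy).
Qed.
Canonical pow_morphism := Morphism pow_morphM.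
Lemma pow_morphimE (A : {set gT}) : A \subset H -> pow_morphism @* A = [set x ^+ r | x in A].
Proof. by move=> sAH; rewrite morphimEsub. Qed.
End Pow.

Lemma Phi_sqfree_exp (gT : finGroupType) (Q : {group gT}) r :
  abelian Q -> {in Q, forall y, y ^+ r = 1} ->
  (forall p, prime p -> p %| #|Q| -> ~~ ((p * p)%N %| r)) -> 'Phi(Q) = 1.
Proof.
move=> cQ Qr sqf; apply/trivgP/subsetP => y Py.
have Qy := subsetP (Phi_sub Q) y Py.
rewrite inE -order_eq1; apply/negPn/negP => ny1.
have y_gt1 : 1 < #[y] by rewrite ltn_neqAle eq_sym ny1 order_gt0.
set p := pdiv #[y].
have pr_p : prime p := pdiv_prime y_gt1.
have p_y : p %| #[y] := pdiv_dvd _.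
have y_r : #[y] %| r by rewrite order_dvdn Qr.
have p_r : p %| r := dvdn_trans p_y y_r.
set s := r %/ p.
have rE : r = (s * p)%N by rewrite divnK.
pose f := @pow_morphism _ _ cQ s.
have abF : p.-abelem (f @* Q).
  rewrite abelemE // morphim_abelian //=; apply/exponentP => _ /morphimP[x _ Qx ->].
  by rewrite /= /pow_fun -expgM -rE Qr.
have : 'Phi(f @* Q) == 1 by rewrite (trivg_Phi (abelem_pgroup abF)).
move/eqP => Phi1.
have := Frattini_continuous f; rewrite Phi1 => /subsetP /(_ (f y)).
rewrite mem_morphim // => /(_ isT); rewrite inE /= /pow_fun -order_dvdn => y_s.
have := sqf p pr_p (dvdn_trans p_y (order_dvdG Qy)); rewrite rE.
by rewrite dvdn_pmul2r ?prime_gt0 // (dvdn_trans p_y y_s).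
Qed.

Lemma PhiE (gT : finGroupType) (H : {group gT}) r : abelian H ->
  (forall p, prime p -> p %| #|H| -> (p %| r) && ~~ ((p * p)%N %| r)) ->
  'Phi(H) = [set x ^+ r | x in H].
Proof.
move=> cH hr; rewrite -(pow_morphimE cH r (subxx H)).
set K := (pow_morphism cH r @* H)%G.
have sKH : K \subset H by apply/subsetP => _ /morphimP[x _ Hx ->]; apply: groupX.
have nKH : H \subset 'N(K) by apply: sub_abelian_norm.
apply/eqP; rewrite eqEsubset; apply/andP; split.
  rewrite -quotient_sub1; last exact: subset_trans (Phi_sub H) nKH.
  have := Frattini_continuous (restrm nKH (coset_morphism K)).
  rewrite !morphim_restrm !(setIidPr (Phi_sub H)) setIid => sub.
  apply: subset_trans sub _; rewrite (@Phi_sqfree_exp _ _ r) ?sub1G //.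
  - exact: quotient_abelian.
  - move=> _ /morphimP[x Nx Hx ->]; rewrite -morphX //=.
    by apply: coset_id; apply: mem_morphim.
  move=> p pr_p pdiv; have pH : p %| #|H|.
    by apply: dvdn_trans pdiv _; rewrite card_quotient // dvdn_indexg.
  by case/andP: (hr p pr_p pH).
apply/subsetP => _ /morphimP[x _ Hx ->]; rewrite /= /pow_fun.
apply/bigcapP => M; rewrite /maximal_eq; case/predU1P => [-> | maxM].
  exact: groupX.
have sMH : M \subset H := proper_sub (maxgroupp maxM).
have nMH : H \subset 'N(M) by apply: sub_abelian_norm.
have mnM : maxnormal M H H.
  apply/maxgroupP; split; first by rewrite (maxgroupp maxM) nMH.
  by move=> L /andP[pL _] sML; apply: (maxgroupP maxM).2.
have pr_p := index_maxnormal_sol_prime (abelian_sol cH) mnM.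
set p := #|H : M| in pr_p.
have /andP[p_r _] := hr p pr_p (dvdn_indexg H M).
have xpM : x ^+ p \in M.
  apply: coset_idr; first by rewrite groupX // (subsetP nMH).
  rewrite morphX ?(subsetP nMH) //= /p -card_quotient //.
  by apply: expg_cardG; apply: mem_quotient.
by rewrite -(divnK p_r) mulnC expgM groupX.
Qed.

Lemma cyc_real (gT : finGroupType) (x : gT) r : 0 < r ->
  (forall p, prime p -> p %| #[x] -> p %| r) ->
  exists hT : finGroupType, exists H : {group hT}, exists cH : abelian H,
   (forall p, prime p -> p %| #|H| -> p %| r) /\ <[x]> \isog pow_morphism cH r @* H.
Proof.
move=> r_gt0 hx.
have : 0 < (#[x] * r)%N by rewrite muln_gt0 order_gt0.
case E: (#[x] * r)%N => [//|m] _.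
exists _, [set: 'I_m.+1]%G, (@Zp_abelian m).
split.
  move=> p pr_p; rewrite cardsT card_ord -E Euclid_dvdM //.
  by case/orP => [/(hx p pr_p) | ].
rewrite pow_morphimE //.
have -> : [set y ^+ r | y in [set: 'I_m.+1]] = <[Zp1 ^+ r]>.
  apply/setP => z; apply/imsetP/cycleP => [[y _ ->] | [k ->]].
    by exists y; rewrite -{1}(Zp1_expgz y) expgAC.
  by exists (Zp1 ^+ k); rewrite ?inE // expgAC.
rewrite isog_cyclic_card ?cycle_cyclic //= -orderE orderXdiv; last first.
  by rewrite order_Zp1 -E dvdn_mull.
by rewrite order_Zp1 -E mulnK.
Qed.

Lemma expg_pair (g1 g2 : finGroupType) (u : g1 * g2) n :
  u ^+ n = (u.1 ^+ n, u.2 ^+ n).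
Proof.
case: u => a b; elim: n => [|n IH]; first by rewrite !expg0.
by rewrite !expgS IH.
Qed.

Lemma setX_abelian (g1 g2 : finGroupType) (H1 : {group g1}) (H2 : {group g2}) :
  abelian H1 -> abelian H2 -> abelian (setX H1 H2).
Proof.
move=> c1 c2; apply/centsP => [[a b]] /setXP[a1 b2] [c d] /setXP[c1' d2].
rewrite /commute /=; congr (_, _).
  exact: (centsP c1 a a1 c c1').
exact: (centsP c2 b b2 d d2).
Qed.

Lemma prod_real (gT : finGroupType) (A B G : {group gT}) r
   (hA hB : finGroupType) (HA : {group hA}) (HB : {group hB})
   (cA : abelian HA) (cB : abelian HB) :
  A \x B = G -> A \isog pow_morphism cA r @* HA -> B \isog pow_morphism cB r @* HB ->
  exists cX : abelian (setX HA HB), G \isog pow_morphism cX r @* setX HA HB.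
Proof.
move=> defG isoA isoB; exists (setX_abelian cA cB).
have -> : pow_morphism (setX_abelian cA cB) r @* setX HA HB
          = setX (pow_morphism cA r @* HA) (pow_morphism cB r @* HB).
  rewrite !pow_morphimE //; apply/setP => [[a b]]; rewrite inE /=.
  apply/imsetP/andP => [[[c d]] /setXP[cA' dB]|[/imsetP[c cA' ->] /imsetP[d dB ->]]].
    by rewrite expg_pair => -[-> ->]; split; apply: imset_f.
  by exists (c, d); rewrite ?inE ?cA' ?dB // expg_pair.
apply: (isog_dprod defG (setX_dprod (pow_morphism cA r @* HA)%G (pow_morphism cB r @* HB)%G)).
  exact: isog_trans isoA (isog_setX1 _ _).
exact: isog_trans isoB (isog_set1X _ _).
Qed.

Lemma ab_real (gT : finGroupType) (G : {group gT}) r : 0 < r -> abelian G ->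
  (forall p, prime p -> p %| #|G| -> p %| r) ->
  exists hT : finGroupType, exists H : {group hT}, exists cH : abelian H,
   (forall p, prime p -> p %| #|H| -> p %| r) /\ G \isog pow_morphism cH r @* H.
Proof.
move=> r_gt0 cG; case: (abelian_structure cG) => b defG _.
elim: b G defG cG => [|x b IH] G.
  rewrite big_nil => <- _ _.
  have h1 : forall p, prime p -> p %| #[1 : gT] -> p %| r.
    by move=> p pr_p; rewrite order1 dvdn1 => /eqP p1; rewrite p1 in pr_p.
  have [hT [H [cH [hH iso]]]] := @cyc_real gT 1 r r_gt0 h1.
  by exists hT, H, cH; split => //; rewrite -cycle1.
rewrite big_cons => dG cG hG.
have [[X K eX eK] mXK _ _] := dprodP dG.
rewrite eK in dG mXK.
have sKG : K \subset G by rewrite -mXK mulG_subr.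
have [hT [H [cH [hH isoK]]]] := IH K eK (abelianS sKG cG)
   (fun p pr_p pK => hG p pr_p (dvdn_trans pK (cardSg sKG))).
have sxG : <[x]> \subset G by rewrite -mXK mulG_subl.
have [hT' [H' [cH' [hH' isox]]]] := @cyc_real gT x r r_gt0
   (fun p pr_p px => hG p pr_p (dvdn_trans px (cardSg sxG))).
have [cX isoG] := prod_real dG isox isoK.
exists _, (setX H' H)%G, cX; split => // p pr_p.
by rewrite cardsX Euclid_dvdM // => /orP[/hH' | /hH]; apply.
Qed.

Lemma sqf_list (s : seq nat) : (forall q, q \in s -> prime q) -> uniq s ->
  [/\ 0 < \prod_(q <- s) q, (forall p, p \in s -> p %| \prod_(q <- s) q),
      (forall p, prime p -> p %| \prod_(q <- s) q -> p \in s) &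
      (forall p, prime p -> ~~ ((p * p)%N %| \prod_(q <- s) q))].
Proof.
elim: s => [|q s IH] hs.
  move=> _; rewrite big_nil; split => // p pr_p.
    by rewrite dvdn1 => /eqP p1; rewrite p1 in pr_p.
  rewrite dvdn1 muln_eq1 andbb; apply/eqP => p1; by rewrite p1 in pr_p.
rewrite cons_uniq => /andP[qs us].
have pr_q : prime q by apply: hs; rewrite inE eqxx.
have hs' : forall q', q' \in s -> prime q'.
  by move=> q' qs'; apply: hs; rewrite inE qs' orbT.
have [P0 Pd Pm Psq] := IH hs' us.
rewrite big_cons; split.
- by rewrite muln_gt0 prime_gt0.
- move=> p; rewrite inE => /orP[/eqP -> | ps]; first exact: dvdn_mulr.
  by apply: dvdn_mull; apply: Pd.
- move=> p pr_p; rewrite Euclid_dvdM // inE => /orP[| /(Pm _ pr_p) ->]; last by rewrite orbT.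
  by rewrite dvdn_prime2 // => ->.
move=> p pr_p; case: (eqVneq p q) => [-> | npq].
  rewrite dvdn_pmul2l ?prime_gt0 //; apply/negP => /(Pm _ pr_q) qs'.
  by rewrite qs' in qs.
rewrite Gauss_dvdr ?Psq // coprimeMl andbb prime_coprime // dvdn_prime2 //.
Qed.

Theorem theorem3p3 (gT : finGroupType) (G : {group gT}) :
  abelian G -> completely_Phi_realisable G.
Proof.
move=> cG.
have hpr : forall q, q \in primes #|G| -> prime q.
  by move=> q; rewrite mem_primes => /andP[].
have [r_gt0 rd _ rsq] := @sqf_list (primes #|G|) hpr (primes_uniq _).
set r := (\prod_(q <- primes #|G|) q)%N in r_gt0 rd rsq.
have hGr : forall p, prime p -> p %| #|G| -> p %| r.
  by move=> p pr_p pG; apply: rd; rewrite mem_primes pr_p cardG_gt0.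
have [hT [H [cH [hH iso]]]] := ab_real r_gt0 cG hGr.
have PhiH1 : forall H1 : {group hT}, H1 \subset H ->
    'Phi(H1) = pow_morphism cH r @* H1.
  move=> H1 sH1; rewrite pow_morphimE // (@PhiE _ _ r) ?(abelianS sH1) //.
  move=> p pr_p pH1; rewrite rsq // andbT.
  exact: hH pr_p (dvdn_trans pH1 (cardSg sH1)).
exists hT, H; case/isogP: iso => f injf fG; split.
- by rewrite PhiH1 // -fG sub_isog.
- move=> G1 sG1; exists (pow_morphism cH r @*^-1 (f @* G1))%G.
    exact: subsetIl.
  rewrite PhiH1 ?subsetIl // morphpreK ?sub_isog //.
  by rewrite -fG morphimS.
move=> H1 sH1; exists (f @*^-1 'Phi(H1))%G; first exact: subsetIl.
rewrite isog_sym; have := sub_isog (subsetIl G (f @^-1: 'Phi(H1))) injf.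
by rewrite morphpreK // fG PhiH1 // morphimS.
Qed.
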